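(* Let $\mathbf{L}=\langle L,\leq,0,1\rangle$ be a totally ordered complete lattice and let $f\colon L\to L$ be order preserving. Then for any ranked data tables $\mathcal{D}_1,\mathcal{D}_2,\mathcal{D}$ and restriction condition $\theta$ for which both sides of the following equalities are defined: (1) $(\mathcal{D}_1\bowtie\mathcal{D}_2)\circ f=(\mathcal{D}_1\circ f)\bowtie(\mathcal{D}_2\circ f)$; (2) $\sigma_{\theta}(\mathcal{D})\circ f=\sigma_{\theta\circ f}(\mathcal{D}\circ f)$; (3) $(\mathcal{D}_1\cup\mathcal{D}_2)\circ f=(\mathcal{D}_1\circ f)\cup(\mathcal{D}_2\circ f)$; (4) $\pi_S(\mathcal{D})\circ f=\pi_S(\mathcal{D}\circ f)$.
   Context: A relation scheme is a finite set of attributes, each with a (at most countable) set of admissible values; a tuple on $R$ assigns to each attribute of $R$ an admissible value; $\mathrm{Tupl}(R)$ is the set of tuples on $R$. Tuples $r$ on $R$ and $s$ on $S$ are joinable if they agree on $R\cap S$; then $rs$ is the tuple on $R\cup S$ extending both. A ranked data table (RDT) on $R$ is a map $\mathcal{D}\colon\mathrm{Tupl}(R)\to L$ with $\{r;\ \mathcal{D}(r)>0\}$ finite. For a map $g$ with values in $L$ and $f\colon L\to L$, $g\circ f$ denotes $x\mapsto f(g(x))$; the operations below are applied to maps such as $\mathcal{D}\circ f$ by the same formulas. Operations: for $\mathcal{D}_1$ on $R\cup S$ and $\mathcal{D}_2$ on $S\cup T$ with $R,S,T$ pairwise disjoint, the join is $(\mathcal{D}_1\bowtie\mathcal{D}_2)(rst)=\inf\{\mathcal{D}_1(rs),\mathcal{D}_2(st)\}$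 for $r\in\mathrm{Tupl}(R),s\in\mathrm{Tupl}(S),t\in\mathrm{Tupl}(T)$. A restriction condition on $R$ is any map $\theta\colon\mathrm{Tupl}(R)\to L$, and $(\sigma_\theta(\mathcal{D}))(r)=\inf\{\mathcal{D}(r),\theta(r)\}$. For $\mathcal{D}_1,\mathcal{D}_2$ on the same $R$, $(\mathcal{D}_1\cup\mathcal{D}_2)(r)=\sup\{\mathcal{D}_1(r),\mathcal{D}_2(r)\}$. For $\mathcal{D}$ on $R$ and $S\subseteq R$, $(\pi_S(\mathcal{D}))(s)=\sup\{\mathcal{D}(st);\ t\in\mathrm{Tupl}(R\setminus S)\}$ for $s\in\mathrm{Tupl}(S)$. A map $f$ is order preserving if $a\leq b$ implies $f(a)\leq f(b)$. *)

(* Defs.v *)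
From Stdlib Require Import List.
From mathcomp Require Import all_boot all_order.
From mathcomp Require Import finmap.
Set Implicit Arguments. Unset Strict Implicit. Unset Printing Implicit Defensive.
Import Order.TTheory.
Local Open Scope order_scope.
Local Open Scope fset_scope.

Section RDT.
Variables (d : Order.disp_t) (L : tbOrderType d).
Variables (A : choiceType) (dom : A -> countType).

Definition Tupl (R : {fset A}) := forall a : {a : A | a \in R}, dom (proj1_sig a).

Definition restr (X Y : {fset A}) (H : X `<=` Y) (u : Tupl Y) : Tupl X :=
  fun a => u (exist _ (proj1_sig a) (fsubsetP H _ (proj2_sig a))).

Definition is_RDT (R : {fset A}) (D : Tupl R -> L) : Prop :=
  exists s : list (Tupl R), forall r, \bot < D r -> In r s.

Definition is_sup_op (sup : (L -> Prop) -> L) : Prop :=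
  forall P : L -> Prop,
    (forall x, P x -> x <= sup P) /\
    (forall y, (forall x, P x -> x <= y) -> sup P <= y).

Lemma subset_RS_RST (R S T : {fset A}) : R `|` S `<=` R `|` S `|` T.
Proof. exact: fsubsetUl. Qed.
Lemma subset_ST_RST (R S T : {fset A}) : S `|` T `<=` R `|` S `|` T.
Proof.
apply/fsubsetP => x; rewrite !inE => /orP [] ->; by rewrite ?orbT.
Qed.

Definition rjoin (R S T : {fset A}) (D1 : Tupl (R `|` S) -> L)
  (D2 : Tupl (S `|` T) -> L) : Tupl (R `|` S `|` T) -> L :=
  fun u => Order.meet (D1 (restr (subset_RS_RST R S T) u)) (D2 (restr (subset_ST_RST R S T) u)).

Definition rselect (R : {fset A}) (theta D : Tupl R -> L) : Tupl R -> L :=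
  fun r => Order.meet (D r) (theta r).

Definition runion (R : {fset A}) (D1 D2 : Tupl R -> L) : Tupl R -> L :=
  fun r => Order.join (D1 r) (D2 r).

(* Projection onto S ⊆ R: pi_S(D)(s) = sup { D(st) ; t on R \ S },
   where the tuples st are exactly the tuples u on R whose restriction to S is s. *)
Definition rproject (sup : (L -> Prop) -> L) (S R : {fset A}) (H : S `<=` R)
  (D : Tupl R -> L) : Tupl S -> L :=
  fun s => sup (fun x => exists u : Tupl R, restr H u = s /\ x = D u).

End RDT.

(* Main.v *)
Require Import Defs.
From mathcomp Require Import all_boot all_order.
From mathcomp Require Import finmap.
From Stdlib Require Import List Classical FunctionalExtensionality.
Import Order.TTheory.
Local Open Scope order_scope.
Local Open Scope fset_scope.

Section Aux.
Variables (d : Order.disp_t) (L : tbOrderType d).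
Variables (f : L -> L) (Hf : {homo f : x y / x <= y}).

Lemma f_meet (x y : L) : f (Order.meet x y) = Order.meet (f x) (f y).
Proof.
case/orP: (le_total x y) => h.
  by rewrite meet_l // meet_l //; apply: Hf.
by rewrite meet_r // meet_r //; apply: Hf.
Qed.

Lemma f_join (x y : L) : f (Order.join x y) = Order.join (f x) (f y).
Proof.
case/orP: (le_total x y) => h.
  by rewrite join_r // join_r //; apply: Hf.
by rewrite join_l // join_l //; apply: Hf.
Qed.

Variables (A : choiceType) (dom : A -> countType) (Hdom : forall a, inhabited (dom a)).

Definition dflt (a : A) : dom a :=
  xchoose (let: inhabits x := Hdom a in ex_intro (fun _ => true) x is_true_true).

Definition ext (S R : {fset A}) (s : Tupl dom S) : Tupl dom R :=
  fun a : {a | a \in R} => match @idP (sval a \in S) with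
           | ReflectT h => s (exist _ (sval a) h)
           | ReflectF _ => dflt (sval a) end.

Lemma ext_restr (S R : {fset A}) (H : S `<=` R) (s : Tupl dom S) :
  restr H (ext S R s) = s.
Proof.
apply: functional_extensionality_dep => -[x hx].
rewrite /restr /ext /=.
destruct (@idP (x \in S)) as [h|h]; last by exfalso; apply: h.
by rewrite (bool_irrelevance h hx).
Qed.

Lemma max_exists (S R : {fset A}) (H : S `<=` R) (D : Tupl dom R -> L)
  (s : Tupl dom S) (u1 : Tupl dom R) (h1 : restr H u1 = s) (l : list (Tupl dom R)) :
  exists u0, restr H u0 = s /\ D u1 <= D u0 /\
    forall r, In r l -> restr H r = s -> D r <= D u0.
Proof.
elim: l => [|r l [u0 [e0 [le0 IH]]]].
  by exists u1; split => //; split.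
case: (classic (restr H r = s)) => hr.
  case/orP: (le_total (D r) (D u0)) => hle.
    exists u0; split => //; split => // r' [<-|] //; exact: IH.
  exists r; split => //; split; first exact: le_trans le0 hle.
  move=> r' [<-|] // hin hr'; exact: le_trans (IH _ hin hr') hle.
exists u0; split => //; split => // r' [<-|]; [by move=> /hr | exact: IH].
Qed.

End Aux.

Theorem theorem6 (d : Order.disp_t) (L : tbOrderType d)
  (sup : (L -> Prop) -> L) (Hsup : is_sup_op sup)
  (f : L -> L) (Hf : {homo f : x y / x <= y})
  (A : choiceType) (dom : A -> countType) (Hdom : forall a, inhabited (dom a)) :
  (* (1) join *)
  (forall (R S T : {fset A}),
     fdisjoint R S -> fdisjoint S T -> fdisjoint R T ->
     forall (D1 : Tupl dom (R `|` S) -> L) (D2 : Tupl dom (S `|` T) -> L),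
       is_RDT D1 -> is_RDT D2 ->
       f \o rjoin D1 D2 = rjoin (f \o D1) (f \o D2)) /\
  (* (2) restriction *)
  (forall (R : {fset A}) (D theta : Tupl dom R -> L),
     is_RDT D ->
     f \o rselect theta D = rselect (f \o theta) (f \o D)) /\
  (* (3) union *)
  (forall (R : {fset A}) (D1 D2 : Tupl dom R -> L),
     is_RDT D1 -> is_RDT D2 ->
     f \o runion D1 D2 = runion (f \o D1) (f \o D2)) /\
  (* (4) projection *)
  (forall (R S : {fset A}) (H : S `<=` R) (D : Tupl dom R -> L),
     is_RDT D ->
     f \o rproject sup H D = rproject sup H (f \o D)).
Proof.
split.
  move=> R S T _ _ _ D1 D2 _ _; apply: functional_extensionality => u.
  by rewrite /= /rjoin f_meet.
split.
  move=> R D th _; apply: functional_extensionality => u.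
  by rewrite /= /rselect f_meet.
split.
  move=> R D1 D2 _ _; apply: functional_extensionality => u.
  by rewrite /= /runion f_join.
move=> R S H D [l Hl]; apply: functional_extensionality => s.
have [u0 [e0 [_ hmax]]] := @max_exists _ _ _ dom S R H D s _ (@ext_restr A dom Hdom S R H s) l.
have hall : forall u, restr H u = s -> D u <= D u0.
  move=> u hu; case: (boolP (\bot < D u)) => hb.
    by apply: hmax => //; apply: Hl.
  rewrite leNgt; apply/negP => hlt; move/negP: hb; apply.
  exact: le_lt_trans (le0x _) hlt.
have E1 : sup (fun x => exists u, restr H u = s /\ x = D u) = D u0.
  apply/le_anti/andP; split.
    by apply: (proj2 (Hsup _)) => x [u [hu ->]]; apply: hall.
  by apply: (proj1 (Hsup _)); exists u0.
have E2 : sup (fun x => exists u, restr H u = s /\ x = (f \o D) u) = f (D u0).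
  apply/le_anti/andP; split.
    by apply: (proj2 (Hsup _)) => x [u [hu ->]]; apply: Hf; apply: hall.
  by apply: (proj1 (Hsup _)); exists u0.
by rewrite /= /rproject E1 E2.
Qed.
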